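(* Let $\kappa=4$ and let $Q=U\operatorname{diag}(0,\lambda_2,\lambda_3,\lambda_4)U^{-1}$ be a GTR rate matrix with stationary distribution $\boldsymbol\pi$, eigenvalues $0>\lambda_2\ge\lambda_3\ge\lambda_4$ and $U$ as in the context. (A) If $\boldsymbol\pi=(1/4,1/4,1/4,1/4)$ and $U=\begin{pmatrix}1&c&b&1\\1&-c&-b&1\\1&-b&c&-1\\1&b&-c&-1\end{pmatrix}$ with $b,c\ge0$, $b^2+c^2=2$, then $\lambda_4>\lambda_2+\lambda_3$ if $bc\neq0$, and $\lambda_4>2\lambda_2$ if $bc=0$. (B) If $\boldsymbol\pi=(1/8,1/8,1/4,1/2)$ and $U=\begin{pmatrix}1&2&\sqrt2&1\\1&-2&\sqrt2&1\\1&0&-\sqrt2&1\\1&0&0&-1\end{pmatrix}$, then $\lambda_4>2\lambda_2$.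
   Context: A GTR rate matrix $Q$ for stationary distribution $\boldsymbol\pi$ (positive entries summing to $1$) is a $4\times4$ real matrix with strictly positive off-diagonal entries, zero row sums, and $\operatorname{diag}(\boldsymbol\pi)Q$ symmetric. $U$ is real with $UU^T=\operatorname{diag}(\boldsymbol\pi)^{-1}$ and first column $\mathbf 1$, and $Q=U\operatorname{diag}(0,\lambda_2,\lambda_3,\lambda_4)U^{-1}$. *)

(* Defs.v *)
From HB Require Import structures.
From mathcomp Require Import all_boot all_order all_algebra.
Set Implicit Arguments. Unset Strict Implicit. Unset Printing Implicit Defensive.
Import Order.TTheory GRing.Theory Num.Theory.
Local Open Scope ring_scope.

Definition mx4 {R : ringType} (a : seq (seq R)) : 'M[R]_4 :=
  \matrix_(i < 4, j < 4) nth 0 (nth [::] a i) j.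

Definition rv4 {R : ringType} (a : seq R) : 'rV[R]_4 :=
  \row_(j < 4) nth 0 a j.

Definition is_distribution {R : numDomainType} (pi : 'rV[R]_4) : Prop :=
  (forall i, 0 < pi 0 i) /\ \sum_(i < 4) pi 0 i = 1.

Definition is_GTR {R : numDomainType} (pi : 'rV[R]_4) (Q : 'M[R]_4) : Prop :=
  [/\ forall i j : 'I_4, i != j -> 0 < Q i j,
      forall i : 'I_4, \sum_(j < 4) Q i j = 0 &
      (diag_mx pi *m Q)^T = diag_mx pi *m Q].

Definition is_eigen_decomp {R : fieldType} (pi : 'rV[R]_4) (Q U : 'M[R]_4)
    (l2 l3 l4 : R) : Prop :=
  [/\ U *m U^T = invmx (diag_mx pi),
      forall i : 'I_4, U i 0 = 1 &
      Q = U *m diag_mx (rv4 [:: 0; l2; l3; l4]) *m invmx U].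

(* Main.v *)
Require Import Defs.
From HB Require Import structures.
From mathcomp Require Import all_boot all_order all_algebra.
Import Order.TTheory GRing.Theory Num.Theory.
Local Open Scope ring_scope.

Lemma Qentry (R : rcfType) (pi : 'rV[R]_4) (Q U : 'M[R]_4) (l2 l3 l4 : R) :
  is_distribution pi -> is_GTR pi Q -> is_eigen_decomp pi Q U l2 l3 l4 ->
  forall i j : 'I_4, i != j -> 0 < \sum_k U i k * (rv4 [:: 0; l2; l3; l4]) 0 k * U j k.
Proof.
move=> [hpos hs] [hoff _ _] [hUU h0 hQ] i j hij.
have hd : diag_mx pi \in unitmx.
  rewrite unitmxE det_diag unitfE; apply/prodf_neq0 => k _.
  by rewrite gt_eqF.
have h1 : U *m (U^T *m diag_mx pi) = 1%:M by rewrite mulmxA hUU mulVmx.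
have hU : U \in unitmx by case: (mulmx1_unit h1).
have hinv : invmx U = U^T *m diag_mx pi.
  by rewrite -[RHS](mulKmx hU) h1 mulmx1.
have := hoff i j hij.
rewrite hQ hinv mul_mx_diag mul_mx_diag !mxE.
rewrite (eq_bigr (fun k => pi 0 j * (U i k * (rv4 [:: 0; l2; l3; l4]) 0 k * U j k))).
  by rewrite -mulr_sumr pmulr_rgt0.
by move=> k _; rewrite !mxE [RHS]mulrC mulrA.

Qed.

Lemma sqmul (R : rcfType) (a l : R) : a * l * a = a ^+ 2 * l.
Proof. by rewrite mulrC mulrA -expr2. Qed.

Lemma partB (R : rcfType) (pi : 'rV[R]_4) (Q U : 'M[R]_4) (l2 l3 l4 : R) :
  is_distribution pi ->
  is_GTR pi Q ->
  is_eigen_decomp pi Q U l2 l3 l4 ->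
  0 > l2 -> l2 >= l3 -> l3 >= l4 ->
  (pi = rv4 [:: 1/8; 1/8; 1/4; 1/2] ->
   U = mx4 [:: [:: 1; 2; Num.sqrt 2; 1];
               [:: 1; -2; Num.sqrt 2; 1];
               [:: 1; 0; - Num.sqrt 2; 1];
               [:: 1; 0; 0; -1]] ->
   l4 > 2 * l2).
Proof.
move=> hd hg he h2 h23 h34 hpi hU.
have := @Qentry _ _ _ _ _ _ _ hd hg he 0 1 isT.
rewrite hU !big_ord_recl big_ord0 !mxE /= !(mul1r, mulr1, mul0r, add0r, addr0, mulrN, mulNr, sqmul).
have e : 2 ^+ 2 * l2 = 2 * l2 + 2 * l2 :> R by rewrite expr2 -mulrA (mulr_natl (2 * l2)) mulr2n.
rewrite sqr_sqrtr ?ler0n // expr1n mul1r e.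
have hy : 2 * l3 <= 2 * l2 by rewrite ler_pM2l ?ltr0n.
move: (2 * l3) (2 * l2) hy => y x hy H.
rewrite -subr_gt0; apply: (lt_le_trans H).
rewrite opprD [l4 - x]addrC -addrA lerD2l addrA gerDr addrC subr_le0 //.
Qed.

Lemma negsum (R : rcfType) (a b x : R) : 0 < - a + (- b + x) -> a + b < x.
Proof. by rewrite addrA -opprD addrC subr_gt0. Qed.

Lemma partA (R : rcfType) (pi : 'rV[R]_4) (Q U : 'M[R]_4) (l2 l3 l4 : R) :
  is_distribution pi ->
  is_GTR pi Q ->
  is_eigen_decomp pi Q U l2 l3 l4 ->
  0 > l2 -> l2 >= l3 -> l3 >= l4 ->
  (forall b c : R,
     pi = rv4 [:: 1/4; 1/4; 1/4; 1/4] ->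
     U = mx4 [:: [:: 1; c; b; 1];
                 [:: 1; -c; -b; 1];
                 [:: 1; -b; c; -1];
                 [:: 1; b; -c; -1]] ->
     0 <= b -> 0 <= c -> b ^+ 2 + c ^+ 2 = 2 ->
     (b * c != 0 -> l4 > l2 + l3) /\ (b * c = 0 -> l4 > 2 * l2)).
Proof.
move=> hd hg he h2 h23 h34 b c hpi hU hb hc hbc.
have := @Qentry _ _ _ _ _ _ _ hd hg he 0 1 isT.
have := @Qentry _ _ _ _ _ _ _ hd hg he 2 3 isT.
rewrite hU !big_ord_recl !big_ord0 !mxE /= !(mul1r, mulr1, mul0r, add0r, addr0, mulrN, mulNr, sqmul, opprK, sqrrN, expr1n).
move=> /negsum H34 /negsum H12; split.
  move=> _; have := ltrD H12 H34.
  rewrite addrACA -!mulrDl [c ^+ 2 + _]addrC hbc -mulrDr (_ : l4 + l4 = 2 * l4); last by rewrite mulr_natl mulr2n.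
  by rewrite ltr_pM2l ?ltr0n.
move/eqP; rewrite mulf_eq0 => /orP [/eqP b0 | /eqP c0].
  move: hbc H12; rewrite b0 expr2 mul0r add0r => ->.
  by rewrite mul0r addr0.
move: hbc H34; rewrite c0 [0 ^+ 2]expr2 mul0r addr0 => ->.
by rewrite mul0r addr0.
Qed.

Theorem lemma3 (R : rcfType) (pi : 'rV[R]_4) (Q U : 'M[R]_4) (l2 l3 l4 : R) :
  is_distribution pi ->
  is_GTR pi Q ->
  is_eigen_decomp pi Q U l2 l3 l4 ->
  0 > l2 -> l2 >= l3 -> l3 >= l4 ->
  (* (A) *)
  (forall b c : R,
     pi = rv4 [:: 1/4; 1/4; 1/4; 1/4] ->
     U = mx4 [:: [:: 1; c; b; 1];
                 [:: 1; -c; -b; 1];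
                 [:: 1; -b; c; -1];
                 [:: 1; b; -c; -1]] ->
     0 <= b -> 0 <= c -> b ^+ 2 + c ^+ 2 = 2 ->
     (b * c != 0 -> l4 > l2 + l3) /\ (b * c = 0 -> l4 > 2 * l2)) /\
  (* (B) *)
  (pi = rv4 [:: 1/8; 1/8; 1/4; 1/2] ->
   U = mx4 [:: [:: 1; 2; Num.sqrt 2; 1];
               [:: 1; -2; Num.sqrt 2; 1];
               [:: 1; 0; - Num.sqrt 2; 1];
               [:: 1; 0; 0; -1]] ->
   l4 > 2 * l2).
Proof.
move=> hd hg he h2 h23 h34; split.
  exact: (@partA _ _ _ _ _ _ _ hd hg he h2 h23 h34).
exact: (@partB _ _ _ _ _ _ _ hd hg he h2 h23 h34).
Qed.
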